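(* Let $X$ be a discretely geodesic metric space with $\beta$-stable intervals, and let $x,x',v\in X$. Define $F_{xv}\colon B(v,\beta)\to\mathbb Z$ by $F_{xv}(u)=d(x,u)-d(x,v)$, and similarly $F_{x'v}$. If $F_{xv}\le F_{x'v}$ on $B(v,\beta)$, then $C(x,v)\subset C(x',v)$. Hence $F_{xv}=F_{x'v}$ implies $C(x,v)=C(x',v)$.
   Context: $B(v,\beta)$ is the closed ball. $X$ is discretely geodesic if $d$ is integer valued and any $x,y$ are joined by an isometric embedding $\gamma\colon\{0,\dots,d(x,y)\}\to X$ with $\gamma(0)=x,\gamma(d(x,y))=y$. $I(x,y)=\{u: d(x,u)+d(u,y)=d(x,y)\}$; $C(x,v)=\{y: v\in I(x,y)\}$. $\beta$-stable intervals: for all $x,y,y'$ with $d(y,y')=1$, the Hausdorff distance between $I(x,y)$ and $I(x,y')$ is at most $\beta$. *)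

(* Defs.v *)
(* A metric space with integer-valued (hence nat-valued, since
   nonnegative) distance. *)
From Stdlib Require Import ZArith Lia.

Record IntMetric (X : Type) := {
  dist : X -> X -> nat;
  dist_eq0 : forall x y, dist x y = 0 <-> x = y;
  dist_sym : forall x y, dist x y = dist y x;
  dist_tri : forall x y z, dist x z <= dist x y + dist y z
}.
Arguments dist {X} _ _ _.

Section Defs.
Context {X : Type} (M : IntMetric X).
Local Notation d := (dist M).

Definition ball (v : X) (beta : nat) (u : X) : Prop := d v u <= beta.

Definition discretely_geodesic : Prop :=
  forall x y : X, exists g : nat -> X,
    g 0 = x /\ g (d x y) = y /\
    forall i j, i <= d x y -> j <= d x y ->
      Z.of_nat (d (g i) (g j)) = Z.abs (Z.of_nat i - Z.of_nat j).

Definition interval (x y : X) (u : X) : Prop := d x u + d u y = d x y.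

Definition cone (x v : X) (y : X) : Prop := interval x y v.

(* Hausdorff distance between A and B is at most beta (distances are integers,
   so infima are attained) *)
Definition hausdorff_le (A B : X -> Prop) (beta : nat) : Prop :=
  (forall a, A a -> exists b, B b /\ d a b <= beta) /\
  (forall b, B b -> exists a, A a /\ d a b <= beta).

Definition stable_intervals (beta : nat) : Prop :=
  forall x y y' : X, d y y' = 1 ->
    hausdorff_le (interval x y) (interval x y') beta.

Definition F (x v u : X) : Z := Z.of_nat (d x u) - Z.of_nat (d x v).

End Defs.

(* Main.v *)
Require Import Defs.
From Stdlib Require Import ZArith Lia.

Lemma part1 (X : Type) (M : IntMetric X) (beta : nat)
  (Hgeo : discretely_geodesic M) (Hstab : stable_intervals M beta)
  (x x' v : X) :
  (forall u, ball M v beta u -> (F M x v u <= F M x' v u)%Z) ->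
     forall y, cone M x v y -> cone M x' v y.
Proof.
  intros HF y.
  remember (dist M v y) as n eqn:Hn. revert y Hn.
  unfold cone, interval, F, ball in *.
  induction n as [|n IH]; intros y Hn Hy.
  - symmetry in Hn. apply dist_eq0 in Hn. subst y.
    assert (dist M v v = 0) by (apply dist_eq0; reflexivity). lia.
  - destruct (Hgeo v y) as [g [g0 [gn Hg]]].
    set (y' := g n).
    assert (Hvy' : dist M v y' = n).
    { pose proof (Hg 0 n ltac:(lia) ltac:(lia)). rewrite g0 in H. unfold y'. lia. }
    assert (Hyy : dist M y' y = 1).
    { pose proof (Hg n (S n) ltac:(lia) ltac:(lia)). rewrite <- Hn in gn.
      rewrite gn in H. unfold y'. lia. }
    assert (Hc : dist M x v + dist M v y' = dist M x y').
    { pose proof (dist_tri _ M x v y'). pose proof (dist_tri _ M x y' y). lia. }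
    specialize (IH y' (eq_sym Hvy') Hc).
    destruct (Hstab x' y' y Hyy) as [H1 _].
    destruct (H1 v IH) as [u [Hu Hdu]].
    specialize (HF u Hdu). unfold interval in Hu.
    pose proof (dist_tri _ M x u y). pose proof (dist_tri _ M x' v y).
    pose proof (dist_tri _ M v u y).
    pose proof (dist_tri _ M x v u). lia.
Qed.

Theorem lemma5p8 (X : Type) (M : IntMetric X) (beta : nat)
  (Hgeo : discretely_geodesic M) (Hstab : stable_intervals M beta)
  (x x' v : X) :
  ((forall u, ball M v beta u -> (F M x v u <= F M x' v u)%Z) ->
     forall y, cone M x v y -> cone M x' v y) /\
  ((forall u, ball M v beta u -> F M x v u = F M x' v u) ->
     forall y, cone M x v y <-> cone M x' v y).
Proof.
  split.
  - apply part1; assumption.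
  - intros HF y. split; apply (part1 X M beta); try assumption;
      intros u Hu; rewrite (HF u Hu); lia.
Qed.
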